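(* Let $n$ be a positive integer, $P = \mathrm{COR}(n)$ and $Q = Q(n)$. Then there exists a spectrahedron $S \subseteq \mathbb{R}^{n\times n}$ with $P \subseteq S \subseteq Q$ and $\operatorname{xc}_{SDP}(S) \leqslant n+1$.
   Context: $\mathrm{COR}(n) = \mathrm{conv}\{bb^\intercal \mid b\in\{0,1\}^n\}$ and $Q(n) = \{x\in\mathbb{R}^{n\times n}\mid \langle 2\,\mathrm{diag}(a)-aa^\intercal, x\rangle \leqslant 1\ \forall a\in\{0,1\}^n\}$, with $\langle\cdot,\cdot\rangle$ the Frobenius inner product. A semidefinite EF of a convex set $S\subseteq\mathbb{R}^d$ is a linear system $\langle E_i, x\rangle + \langle F_i, Y\rangle = g_i$ ($i\in[k]$), $Y \in \mathcal{S}^r_+$ (the cone of $r\times r$ symmetric positive semidefinite matrices), with $E_i\in\mathbb{R}^d$ and $F_i$ symmetric $r\times r$, such that $x\in S$ iff there exists $Y\in\mathcal{S}^r_+$ satisfying the system; its size is $r$. A spectrahedron is a convex set admitting a semidefinite EF, and $\operatorname{xc}_{SDP}(S)$ is the minimum size of a semidefinite EF of $S$. *)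

(* Defs.v *)
From HB Require Import structures.
From mathcomp Require Import all_boot all_order all_algebra.
From mathcomp Require Import reals.
Set Implicit Arguments. Unset Strict Implicit. Unset Printing Implicit Defensive.
Import Order.TTheory GRing.Theory Num.Theory.
Local Open Scope ring_scope.

Section Defs.
Variable R : realType.

Definition frob (m n : nat) (A X : 'M[R]_(m, n)) : R :=
  \sum_(i < m) \sum_(j < n) A i j * X i j.

Definition psd (r : nat) (Y : 'M[R]_r) : Prop :=
  Y^T = Y /\ forall v : 'cV[R]_r, 0 <= (v^T *m Y *m v) 0 0.

Definition conv (n : nat) (A : 'M[R]_n -> Prop) : 'M[R]_n -> Prop :=
  fun x => exists (m : nat) (p : 'I_m -> 'M[R]_n) (lam : 'I_m -> R),
    (forall i, A (p i)) /\ (forall i, 0 <= lam i) /\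
    \sum_(i < m) lam i = 1 /\ x = \sum_(i < m) lam i *: p i.

Definition bvec (n : nat) (b : 'I_n -> bool) : 'cV[R]_n :=
  \col_i (b i)%:R.

Definition COR (n : nat) : 'M[R]_n -> Prop :=
  conv (fun X => exists b : 'I_n -> bool, X = bvec b *m (bvec b)^T).

Definition Qset (n : nat) : 'M[R]_n -> Prop :=
  fun x => forall a : 'I_n -> bool,
    frob (2%:R *: diag_mx (bvec a)^T - bvec a *m (bvec a)^T) x <= 1.

Definition has_sdp_ef (n : nat) (S : 'M[R]_n -> Prop) (r : nat) : Prop :=
  exists (k : nat) (E : 'I_k -> 'M[R]_n) (F : 'I_k -> 'M[R]_r) (g : 'I_k -> R),
    (forall i, (F i)^T = F i) /\
    forall x : 'M[R]_n,
      S x <-> exists Y : 'M[R]_r, psd Y /\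
                forall i, frob (E i) x + frob (F i) Y = g i.

Definition spectrahedron (n : nat) (S : 'M[R]_n -> Prop) : Prop :=
  exists r, has_sdp_ef S r.

(* xc_SDP(S) <= t : the minimum size of a semidefinite EF of S is <= t,
   i.e. S has a semidefinite EF of some size r <= t *)
Definition xc_sdp_le (n : nat) (S : 'M[R]_n -> Prop) (t : nat) : Prop :=
  exists r, (r <= t)%N /\ has_sdp_ef S r.

End Defs.

(* Main.v *)
Require Import Defs.
From mathcomp Require Import all_boot all_order all_algebra.
From mathcomp Require Import reals.
From mathcomp Require Import ring lra.
Import Order.TTheory GRing.Theory Num.Theory.
Local Open Scope ring_scope.
Section S.
Variable R : realType.

Lemma sum2_delta m k (a : 'I_m) (b : 'I_k) (f : 'I_m -> 'I_k -> R) :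
  \sum_i \sum_j ((i == a) && (j == b))%:R * f i j = f a b.
Proof.
rewrite (bigD1 a) //= [X in _ + X]big1 => [|i /negbTE ->]; last first.
  by apply: big1 => j _; rewrite /= mul0r.
rewrite addr0 (bigD1 b) //= !eqxx mul1r big1 ?addr0 // => j /negbTE ->.
by rewrite mul0r.
Qed.

Lemma frob_delta m k (a : 'I_m) (b : 'I_k) (X : 'M[R]_(m,k)) :
  frob (delta_mx a b) X = X a b.
Proof. by rewrite /frob -sum2_delta; apply: eq_bigr => i _; apply: eq_bigr => j _; rewrite mxE. Qed.

Lemma frob_sum1 m k (c : 'I_m -> 'I_k -> R) (X : 'M[R]_(m,k)) :
  frob (\matrix_(i,j) c i j) X = \sum_i \sum_j c i j * X i j.
Proof. by apply: eq_bigr => i _; apply: eq_bigr => j _; rewrite mxE. Qed.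

Lemma frobD m k (A B X : 'M[R]_(m,k)) : frob (A + B) X = frob A X + frob B X.
Proof. rewrite /frob -big_split; apply: eq_bigr => i _; rewrite -big_split; apply: eq_bigr => j _; by rewrite mxE mulrDl. Qed.

Lemma frobZ m k a (A X : 'M[R]_(m,k)) : frob (a *: A) X = a * frob A X.
Proof. rewrite /frob mulr_sumr; apply: eq_bigr => i _; rewrite mulr_sumr; apply: eq_bigr => j _; by rewrite mxE mulrA. Qed.

Lemma frobN m k (A X : 'M[R]_(m,k)) : frob (- A) X = - frob A X.
Proof. by rewrite -scaleN1r frobZ mulN1r. Qed.

Variable n : nat.
Implicit Types x : 'M[R]_n.
Definition vv (a : 'I_n -> bool) : 'cV[R]_n.+1 :=
  \col_p match unlift ord0 p with Some i => - (a i)%:R | None => 1 end.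
Lemma vv0 a : vv a ord0 0 = 1. Proof. by rewrite mxE unlift_none. Qed.
Lemma vvl a i : vv a (lift ord0 i) 0 = - (a i)%:R. Proof. by rewrite mxE liftK. Qed.
Lemma quad (v : 'cV[R]_n.+1) (M : 'M[R]_n.+1) :
  (v^T *m M *m v) 0 0 = \sum_q (\sum_p v p 0 * M p q) * v q 0.
Proof.
rewrite mxE; apply: eq_bigr => q _; rewrite mxE; congr (_ * _).
by apply: eq_bigr => p _; rewrite mxE.
Qed.
Lemma frob_diag (d : 'rV[R]_n) x : frob (diag_mx d) x = \sum_i d 0 i * x i i.
Proof.
apply: eq_bigr => i _; rewrite (bigD1 i) //= big1 ?addr0.
  by rewrite mxE eqxx mulr1n.
by move=> j ji; rewrite mxE eq_sym (negbTE ji) mulr0n mul0r.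
Qed.
Lemma frob_outer (w : 'cV[R]_n) x : frob (w *m w^T) x = \sum_i \sum_j w i 0 * w j 0 * x i j.
Proof.
apply: eq_bigr => i _; apply: eq_bigr => j _; rewrite mxE big_ord1 !mxE //.
Qed.
Definition ext x (p q : 'I_n.+1) : R :=
  match unlift ord0 p, unlift ord0 q with
  | Some a, Some b => x a b
  | Some a, None => x a a
  | None, Some b => x b b
  | None, None => 0 end.
Definition gg (p q : 'I_n.+1) : R :=
  match unlift ord0 p, unlift ord0 q with None, None => 1 | _, _ => 0 end.
Definition Mk x : 'M[R]_n.+1 := \matrix_(p,q) (ext x p q + gg p q).
Lemma Mk00 x : Mk x ord0 ord0 = 1.
Proof. by rewrite mxE /ext /gg unlift_none add0r. Qed.
Lemma Mk0l x j : Mk x ord0 (lift ord0 j) = x j j.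
Proof. by rewrite mxE /ext /gg unlift_none liftK addr0. Qed.
Lemma Mkl0 x j : Mk x (lift ord0 j) ord0 = x j j.
Proof. by rewrite mxE /ext /gg unlift_none liftK addr0. Qed.
Lemma Mkll x i j : Mk x (lift ord0 i) (lift ord0 j) = x i j.
Proof. by rewrite mxE /ext /gg !liftK addr0. Qed.

Lemma quad2 (v : 'cV[R]_n.+1) (M : 'M[R]_n.+1) :
  (v^T *m M *m v) 0 0 = (v ord0 0 * M ord0 ord0 + \sum_i v (lift ord0 i) 0 * M (lift ord0 i) ord0) * v ord0 0
   + \sum_j (v ord0 0 * M ord0 (lift ord0 j) + \sum_i v (lift ord0 i) 0 * M (lift ord0 i) (lift ord0 j)) * v (lift ord0 j) 0.
Proof.
rewrite quad big_ord_recl; congr (_ + _); first by rewrite big_ord_recl.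
by apply: eq_bigr => j _; rewrite big_ord_recl.
Qed.

Lemma quadMk x (a : 'I_n -> bool) :
  ((vv a)^T *m Mk x *m vv a) 0 0 =
  1 - (\sum_i (a i)%:R * x i i) *+ 2 + \sum_i \sum_j (a i)%:R * (a j)%:R * x i j.
Proof.
have e1 : \sum_i vv a (lift ord0 i) 0 * Mk x (lift ord0 i) ord0 = - \sum_i (a i)%:R * x i i.
  by rewrite -sumrN; apply: eq_bigr => i _; rewrite vvl Mkl0 mulNr.
have e2 : \sum_j (vv a ord0 0 * Mk x ord0 (lift ord0 j) +
     \sum_i vv a (lift ord0 i) 0 * Mk x (lift ord0 i) (lift ord0 j)) * vv a (lift ord0 j) 0
   = - \sum_i (a i)%:R * x i i + \sum_i \sum_j (a i)%:R * (a j)%:R * x i j.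
  rewrite [X in _ = _ + X]exchange_big /= -sumrN -big_split /=; apply: eq_bigr => j _.
  rewrite vv0 mul1r Mk0l vvl mulrDl big_distrl /=; congr (_ + _); first by ring.
  by apply: eq_bigr => i _; rewrite vvl Mkll; ring.
rewrite quad2 e1 e2 vv0 Mk00 mulr2n; ring.
Qed.

Lemma psdQ x : psd (Mk x) -> Qset x.
Proof.
move=> [_ H] a; have := H (vv a); rewrite quadMk => Hq.
rewrite frobD frobN frobZ frob_diag frob_outer.
have -> : \sum_i (bvec R a)^T 0 i * x i i = \sum_i (a i)%:R * x i i.
  by apply: eq_bigr => i _; rewrite !mxE.
have -> : \sum_i \sum_j bvec R a i 0 * bvec R a j 0 * x i j = \sum_i \sum_j (a i)%:R * (a j)%:R * x i j.
  by apply: eq_bigr => i _; apply: eq_bigr => j _; rewrite !mxE.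
rewrite mulr2n in Hq; lra.
Qed.

Definition coefb (p q : 'I_n.+1) (i j : 'I_n) : bool :=
  match unlift ord0 p, unlift ord0 q with
  | Some a, Some b => (i == a) && (j == b)
  | Some a, None => (i == a) && (j == a)
  | None, Some b => (i == b) && (j == b)
  | None, None => false end.
Lemma frob_coef x p q : frob (\matrix_(i,j) (coefb p q i j)%:R) x = ext x p q.
Proof.
rewrite frob_sum1 /coefb /ext; case: (unlift _ p) => [a|]; case: (unlift _ q) => [b|];
  rewrite ?sum2_delta //.
by rewrite big1 // => i _; rewrite big1 // => j _; rewrite mul0r.
Qed.

Lemma symE r (Y : 'M[R]_r) i j : Y^T = Y -> Y j i = Y i j.
Proof. by move=> h; rewrite -[in RHS]h mxE. Qed.

Lemma frobF r (Y : 'M[R]_r) p q : Y^T = Y ->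
  frob (2^-1 *: (delta_mx p q + delta_mx q p)) Y = Y p q.
Proof. move=> h; rewrite frobZ frobD !frob_delta (symE _ _ p q h); lra. Qed.

Lemma psd_outer r (w : 'cV[R]_r) : psd (w *m w^T).
Proof.
split; first by rewrite trmx_mul trmxK.
move=> v; rewrite mulmxA -mulmxA.
have -> : w^T *m v = (v^T *m w)^T by rewrite trmx_mul trmxK.
rewrite mxE big_ord1 [X in _ * X]mxE -expr2; exact: sqr_ge0.
Qed.

Lemma psd_comb r m (lam : 'I_m -> R) (Y : 'I_m -> 'M[R]_r) :
  (forall i, 0 <= lam i) -> (forall i, psd (Y i)) -> psd (\sum_i lam i *: Y i).
Proof.
move=> hl hY; split.
  apply/matrixP => i j; rewrite mxE !summxE; apply: eq_bigr => k _.
  by rewrite !mxE (symE _ _ i j (proj1 (hY k))).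
move=> v; rewrite mulmx_sumr mulmx_suml summxE; apply: sumr_ge0 => k _.
rewrite -scalemxAr -scalemxAl mxE mulr_ge0 //; exact: (proj2 (hY k)).
Qed.

Lemma ext_comb m (lam : 'I_m -> R) (P : 'I_m -> 'M[R]_n) p q :
  ext (\sum_i lam i *: P i) p q = \sum_i lam i * ext (P i) p q.
Proof.
rewrite /ext; case: (unlift _ p) => [a|]; case: (unlift _ q) => [b|];
  rewrite ?summxE; try (apply: eq_bigr => i _; by rewrite mxE).
by rewrite big1 // => i _; rewrite mulr0.
Qed.

Lemma Mk_comb m (lam : 'I_m -> R) (P : 'I_m -> 'M[R]_n) :
  \sum_i lam i = 1 -> Mk (\sum_i lam i *: P i) = \sum_i lam i *: Mk (P i).
Proof.
move=> h1; apply/matrixP => p q; rewrite mxE summxE ext_comb.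
under [in RHS]eq_bigr => i _ do rewrite !mxE mulrDr.
by rewrite big_split /= -big_distrl /= h1 mul1r.
Qed.

Definition ww (b : 'I_n -> bool) : 'cV[R]_n.+1 :=
  \col_p match unlift ord0 p with Some i => (b i)%:R | None => 1 end.

Lemma Mk_bb b : Mk (bvec R b *m (bvec R b)^T) = ww b *m (ww b)^T.
Proof.
apply/matrixP => p q; rewrite !mxE big_ord1 !mxE /ext /gg.
case: (unlift _ p) => [i|]; case: (unlift _ q) => [j|];
  rewrite ?mxE ?big_ord1 ?mxE ?addr0 ?add0r ?mulr1 ?mul1r //.
by case: (b i); rewrite ?mul1r ?mul0r.
by case: (b j); rewrite ?mul1r ?mul0r.
Qed.

Lemma COR_S x : COR x -> psd (Mk x).
Proof.
move=> [m [P [lam [hP [hl [h1 ->]]]]]].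
rewrite Mk_comb //; apply: psd_comb => // i.
have [b ->] := hP i; rewrite Mk_bb; exact: psd_outer.
Qed.

Lemma EF : has_sdp_ef (fun x => psd (Mk x)) n.+1.
Proof.
pose k := #|{: 'I_n.+1 * 'I_n.+1}|.
pose E := fun t : 'I_k => - \matrix_(i,j) (coefb (enum_val t).1 (enum_val t).2 i j)%:R : 'M[R]_n.
pose F := fun t : 'I_k => 2^-1 *: (delta_mx (enum_val t).1 (enum_val t).2
                                   + delta_mx (enum_val t).2 (enum_val t).1) : 'M[R]_n.+1.
pose g := fun t : 'I_k => gg (enum_val t).1 (enum_val t).2.
exists k, E, F, g; split.
  move=> t; apply/matrixP => i j; rewrite !mxE addrC; congr (_ * (_ + _)); by rewrite andbC.
move=> x; split.
  move=> hx; exists (Mk x); split => // t.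
  rewrite /E /F /g frobN frob_coef frobF; last exact: (proj1 hx).
  by rewrite mxE addKr.
move=> [Y [hY hc]].
suff -> : Mk x = Y by [].
apply/matrixP => p q; have := hc (enum_rank (p, q)).
rewrite /E /F /g enum_rankK /= frobN frob_coef frobF; last exact: (proj1 hY).
by rewrite mxE => <-; rewrite addrA addrN add0r.
Qed.
End S.

Theorem lemma9 (R : realType) (n : nat) (hn : (0 < n)%N) :
  exists S : 'M[R]_n -> Prop,
    (forall x, COR x -> S x) /\ (forall x, S x -> Qset x) /\
    spectrahedron S /\ xc_sdp_le S n.+1.
Proof.
exists (fun x : 'M[R]_n => psd (@Mk R n x)); split; first exact: (@COR_S R n).
split; first exact: (@psdQ R n).
split; first by exists n.+1; exact: (@EF R n).
by exists n.+1; split => //; exact: (@EF R n).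
Qed.
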